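(* Let $f:\{0,\tfrac12,1\}^V\to\mathbb{R}$ be a bisubmodular function and let $\mathcal{A}\subseteq\{0,\tfrac12,1\}^V$ be its set of minimising assignments. Then the set $\mathcal{A}\cap\{0,1\}^V$ of integral global minimisers of $f$ can be modelled as the set of solutions to a (crisp) 2-CNF formula on $V$.
   Context: The operations $\sqcap,\sqcup$ on $\{0,\tfrac12,1\}$ are: $x\sqcap x=x\sqcup x=x$; $0\sqcap1=0\sqcup1=\tfrac12$; for $a\in\{0,1\}$, $a\sqcap\tfrac12=\tfrac12$ and $a\sqcup\tfrac12=a$ (and symmetrically). $f$ is bisubmodular if $f(A)+f(B)\ge f(A\sqcap B)+f(A\sqcup B)$ for all $A,B\in\{0,\tfrac12,1\}^V$, operations coordinatewise. *)

(* Defs.v *)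
From mathcomp Require Import all_boot all_order all_algebra.
Set Implicit Arguments. Unset Strict Implicit. Unset Printing Implicit Defensive.
Import Order.TTheory GRing.Theory Num.Theory.
Local Open Scope ring_scope.

Inductive tern := H0 | Hh | H1.

Definition half_eqb (a b : tern) : bool :=
  match a, b with H0, H0 | Hh, Hh | H1, H1 => true | _, _ => false end.

Definition hmeet (a b : tern) : tern :=
  match a, b with
  | H0, H0 => H0
  | H1, H1 => H1
  | _, _ => Hh
  end.

Definition hjoin (a b : tern) : tern :=
  match a, b with
  | H0, H0 => H0
  | H1, H1 => H1
  | Hh, Hh => Hh
  | H0, H1 | H1, H0 => Hh
  | H0, Hh | Hh, H0 => H0
  | H1, Hh | Hh, H1 => H1
  end.

Definition vmeet (V : Type) (A B : V -> tern) : V -> tern := fun v => hmeet (A v) (B v).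
Definition vjoin (V : Type) (A B : V -> tern) : V -> tern := fun v => hjoin (A v) (B v).

Definition bisubmodular (V : Type) (R : realDomainType) (f : (V -> tern) -> R) : Prop :=
  forall A B : V -> tern, f (vmeet A B) + f (vjoin A B) <= f A + f B.

Definition is_minimiser (V : Type) (R : realDomainType) (f : (V -> tern) -> R)
  (A : V -> tern) : Prop := forall B : V -> tern, f A <= f B.

Definition of_bool (V : Type) (x : V -> bool) : V -> tern :=
  fun v => if x v then H1 else H0.

Definition literal (V : Type) := (V * bool)%type.
Definition clause (V : Type) := seq (literal V).

Definition lit_sat (V : Type) (x : V -> bool) (l : literal V) : bool :=
  x l.1 == l.2.
Definition clause_sat (V : Type) (x : V -> bool) (c : clause V) : bool :=
  has (lit_sat x) c.
Definition is_2CNF (V : Type) (phi : seq (clause V)) : bool :=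
  all (fun c => size c <= 2)%N phi.
Definition cnf_sat (V : Type) (x : V -> bool) (phi : seq (clause V)) : bool :=
  all (clause_sat x) phi.

(* Main.v *)
Require Import Defs.
From mathcomp Require Import all_boot all_order all_algebra.
From mathcomp Require Import lra.
From Stdlib Require Import Classical FunctionalExtensionality.
Import Order.TTheory GRing.Theory Num.Theory.

Section S.
Variables (V : finType) (R : realDomainType) (f : (V -> tern) -> R).
Hypothesis hf : bisubmodular f.

Lemma min_meet A B : is_minimiser f A -> is_minimiser f B -> is_minimiser f (vmeet A B).
Proof.
move=> hA hB C; have h := hf A B; have h1 := hA C; have h2 := hB (vjoin A B).
lra.
Qed.

Lemma min_join A B : is_minimiser f A -> is_minimiser f B -> is_minimiser f (vjoin A B).
Proof.
move=> hA hB C; have h := hf A B; have h1 := hA C; have h2 := hB (vmeet A B).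
lra.
Qed.

Definition maj (x y z : V -> bool) : V -> bool :=
  fun v => [|| x v && y v, x v && z v | y v && z v].

Lemma maj_eq x y z : of_bool (maj x y z) =
  vjoin (vjoin (vmeet (of_bool x) (of_bool y)) (of_bool z))
        (vjoin (vmeet (of_bool x) (of_bool z)) (of_bool y)).
Proof.
apply: functional_extensionality => v; rewrite /of_bool /vjoin /vmeet /maj.
by case: (x v); case: (y v); case: (z v).
Qed.

Lemma min_maj x y z : is_minimiser f (of_bool x) -> is_minimiser f (of_bool y) ->
  is_minimiser f (of_bool z) -> is_minimiser f (of_bool (maj x y z)).
Proof.
move=> hx hy hz; rewrite maj_eq.
by apply: min_join; apply: min_join => //; apply: min_meet.
Qed.

End S.

Lemma sel_list (T : eqType) (P : T -> Prop) (s : seq T) :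
  exists s' : seq T, (forall c, c \in s' -> c \in s /\ P c) /\
             (forall c, c \in s -> P c -> c \in s').
Proof.
elim: s => [|a s [s' [h1 h2]]]; first by exists [::].
case: (classic (P a)) => Pa.
- exists (a :: s'); split.
  + move=> c; rewrite in_cons => /orP [/eqP -> | /h1 [? ?]].
    * by rewrite mem_head.
    * by rewrite in_cons; split => //; apply/orP; right.
  + move=> c; rewrite !in_cons => /orP [-> //| cs Pc].
    by rewrite h2 ?orbT.
- exists s'; split.
  + by move=> c /h1 [? ?]; rewrite in_cons; split => //; apply/orP; right.
  + move=> c; rewrite in_cons => /orP [/eqP -> //| cs Pc]; by apply: h2.
Qed.

Theorem lemma23 (V : finType) (R : realDomainType) (f : (V -> tern) -> R) :
  bisubmodular f ->
  exists phi : seq (clause V),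
    is_2CNF phi /\
    forall x : V -> bool, cnf_sat x phi <-> is_minimiser f (of_bool x).
Proof.
move=> hf.
set M := fun x : V -> bool => is_minimiser f (of_bool x).
set cands : seq (clause V) := [::] :: [seq [:: a; b] | a <- enum {: V * bool}, b <- enum {: V * bool}].
have [phi [h1 h2]] := @sel_list _ (fun c : clause V => forall x, M x -> clause_sat x c) cands.
exists phi; split.
  apply/allP => c /h1 [] + _; rewrite /cands in_cons => /orP [/eqP -> //|].
  by case/allpairsP => -[a b] /= [_ _ ->].
move=> x; split; last first.
  by move=> Mx; apply/allP => c /h1 [_]; apply.
move/allP => hx.
have cand2 a b : [:: a; b] \in cands.
  by rewrite /cands in_cons; apply/orP; right; apply/allpairsP; exists (a, b); rewrite !mem_enum.
have pair u v : exists y, M y /\ y u = x u /\ y v = x v.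
  apply: NNPP => hn.
  have : clause_sat x [:: (u, ~~ x u); (v, ~~ x v)].
    apply: hx; apply: h2 => // y My; rewrite /clause_sat /= /lit_sat /=.
    case: (boolP (y u == ~~ x u)) => //= /negP hu.
    case: (boolP (y v == ~~ x v)) => //= /negP hv.
    exfalso; apply: hn; exists y; split => //; split.
      by case: (y u) hu; case: (x u); rewrite ?andbT ?andbF ?orbT ?orbF.
    by case: (y v) hv; case: (x v); rewrite ?andbT ?andbF ?orbT ?orbF.
  by rewrite /clause_sat /= /lit_sat /=; case: (x u); case: (x v); rewrite ?andbT ?andbF ?orbT ?orbF.
have ne : exists y, M y.
  apply: NNPP => hn.
  have : clause_sat x [::].
    apply: hx; apply: h2; first by rewrite /cands mem_head.
    by move=> y My; exfalso; apply: hn; exists y.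
  by [].
have key (s : seq V) : (forall u v, exists y, M y /\ y u = x u /\ y v = x v /\
                          forall t, t \in s -> y t = x t) /\
                       (exists y, M y /\ forall t, t \in s -> y t = x t).
  elim: s => [|w s [IH1 IH2]].
    split; last by case: ne => y My; exists y.
    by move=> u v; case: (pair u v) => y [My [? ?]]; exists y.
  have Q1 : forall u v, exists y, M y /\ y u = x u /\ y v = x v /\
                          forall t, t \in w :: s -> y t = x t.
    move=> u v.
    case: (IH1 u v) => y1 [M1 [a1 [b1 c1]]].
    case: (IH1 w u) => y2 [M2 [a2 [b2 c2]]].
    case: (pair w v) => y3 [M3 [a3 b3]].
    exists (@maj V y1 y2 y3); split; first exact: (@min_maj _ _ f hf).
    rewrite /maj; split; first by rewrite a1 b2; case: (x u); rewrite ?andbT ?andbF ?orbT ?orbF.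
    split; first by rewrite b1 b3; case: (x v); rewrite ?andbT ?andbF ?orbT ?orbF.
    move=> t; rewrite in_cons => /orP [/eqP ->|ts].
      by rewrite a2 a3; case: (x w); rewrite ?andbT ?andbF ?orbT ?orbF.
    by rewrite c1 // c2 //; case: (x t); rewrite ?andbT ?andbF ?orbT ?orbF.
  split => //; case: (Q1 w w) => y [My [_ [_ h]]]; by exists y.
case: (key (enum V)) => _ [y [My hy]].
suff -> : x = y by [].
by apply: functional_extensionality => t; rewrite hy // mem_enum.
Qed.
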